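(* Let $G$ be a graph with $n$ vertices and $m\ge 1$ edges. Then $$EE(G) > e^{R_{1/2}/m} + (n-1) - \frac{R_{1/2}}{m},$$ where $R_{1/2}=R_{1/2}(G)$.
   Context: All graphs are finite, simple and undirected. For a graph $G$ with adjacency matrix $A(G)$ having eigenvalues $\lambda_1\ge\cdots\ge\lambda_n$, the Estrada index is $EE(G)=\sum_{i=1}^n e^{\lambda_i}$. Writing $d(i)$ for the degree of vertex $i$ and $\mathcal{E}(G)$ for the edge set, $R_\alpha(G)=\sum_{ij\in\mathcal{E}(G)}(d(i)d(j))^\alpha$; in particular $R_{1/2}(G)=\sum_{ij\in\mathcal{E}(G)}\sqrt{d(i)d(j)}$. *)

(* Defs.v *)
From Stdlib Require Import Reals List Arith Bool.
Import ListNotations.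
Open Scope R_scope.

Fixpoint sumR (n : nat) (f : nat -> R) : R :=
  match n with O => 0 | S k => sumR k f + f k end.
Fixpoint sumN (n : nat) (f : nat -> nat) : nat :=
  match n with O => 0%nat | S k => (sumN k f + f k)%nat end.

(* A simple graph on vertices 0..n-1, given by a boolean adjacency relation. *)
Definition simple_graph (adj : nat -> nat -> bool) : Prop :=
  (forall i j, adj i j = adj j i) /\ (forall i, adj i i = false).

Definition deg (n : nat) (adj : nat -> nat -> bool) (i : nat) : nat :=
  sumN n (fun j => if adj i j then 1%nat else 0%nat).

Definition num_edges (n : nat) (adj : nat -> nat -> bool) : nat :=
  sumN n (fun i => sumN n (fun j => if andb (i <? j)%nat (adj i j) then 1%nat else 0%nat)).

Definition randic_half (n : nat) (adj : nat -> nat -> bool) : R :=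
  sumR n (fun i => sumR n (fun j =>
    if andb (i <? j)%nat (adj i j) then sqrt (INR (deg n adj i * deg n adj j)) else 0)).

Definition adj_matrix (adj : nat -> nat -> bool) (i j : nat) : R :=
  if adj i j then 1 else 0.

Definition minor (M : nat -> nat -> R) (j : nat) (r c : nat) : R :=
  M (S r) (if (c <? j)%nat then c else S c).
Fixpoint det (n : nat) (M : nat -> nat -> R) : R :=
  match n with
  | O => 1
  | S k => sumR (S k) (fun j => (-1) ^ j * M O j * det k (minor M j))
  end.

Definition char_poly (n : nat) (A : nat -> nat -> R) (x : R) : R :=
  det n (fun i j => (if Nat.eqb i j then x else 0) - A i j).

Definition is_spectrum (n : nat) (A : nat -> nat -> R) (L : list R) : Prop :=
  length L = n /\
  forall x, char_poly n A x = fold_right (fun l acc => (x - l) * acc) 1 L.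

Definition estrada (L : list R) : R := fold_right (fun l acc => exp l + acc) 0 L.

(* Main.v *)
Require Import Defs.
From Stdlib Require Import Reals List Arith Lra Lia.
From mathcomp Require Import all_boot all_order all_algebra complex Rstruct.
Set Implicit Arguments. Unset Strict Implicit. Unset Printing Implicit Defensive.
Import Order.TTheory GRing.Theory Num.Theory.

Section Spec.
Local Open Scope ring_scope.
Local Open Scope complex_scope.
Local Open Scope sesquilinear_scope.

Local Notation C := (complex R).
Local Notation f := (real_complex R).

Lemma fle (a b : R) : (f a <= f b :> C) = (a <= b).
Proof. by rewrite lecE /= eqxx. Qed.

Lemma spectral_bound (n : nat) (A : 'M[R]_n) (L : seq R) (x : 'rV[R]_n) :
  A^T = A -> char_poly A = \prod_(l <- L) ('X - l%:P) -> (0 < n)%N ->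
  exists2 l, l \in L & (x *m A *m x^T) 0 0 <= l * (x *m x^T) 0 0.
Proof.
move=> sym hchar n0.
set Ac : 'M[C]_n := map_mx f A.
have AcH : Ac ^t* = Ac.
  apply/matrixP => i j; rewrite !mxE.
  have -> : A j i = A i j by rewrite -{1}sym mxE.
  exact: conjc_real.
have Anorm : Ac \is normalmx by rewrite qualifE AcH.
set P := spectralmx Ac; set d := spectral_diag Ac.
have Pu : P \is unitarymx := spectral_unitarymx Ac.
have eqA : Ac = P^t* *m diag_mx d *m P.
  by rewrite -invmx_unitary //; apply/orthomx_spectralP.
have PP : P^t* *m P = 1%:M.
  by rewrite -invmx_unitary // mulVmx // unitarymx_unit.
have PP' : P *m P^t* = 1%:M by apply/unitarymxP.
have dreal : d \is a realmx.
  by apply: hermitian_spectral_diag_real; apply/is_hermitianmxP; rewrite expr0 scale1r AcH.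
have dR j : f (@complex.Re R (d 0 j)) = d 0 j by apply: RRe_real; apply: (mxOverP dreal).
pose i0 := [arg max_(i > Ordinal n0) @complex.Re R (d 0 i)]%O.
have Hi0 : forall j, d 0 j <= d 0 i0.
  move=> j; rewrite -dR -(dR i0) fle /i0.
  by case: arg_maxP => // k _; apply.
have eig : eigenvalue Ac (d 0 i0).
  apply/eigenvalueP; exists (row i0 P).
    rewrite -row_mul eqA !mulmxA PP' mul1mx.
    apply/rowP => j; rewrite !mxE (bigD1 i0) //= big1 ?addr0 ?mxE ?eqxx ?mulr1n //.
    by move=> k nk; rewrite mxE eq_sym (negbTE nk) mulr0n mul0r.
  apply/negP => /eqP h0.
  have : row i0 (P *m P^t*) = 0 by rewrite row_mul h0 mul0mx.
  rewrite PP' => /rowP /(_ i0); rewrite !mxE eqxx /=.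
  by move/eqP; rewrite oner_eq0.
have : d 0 i0 \in map f L.
  rewrite -root_prod_XsubC big_map -(map_prod_XsubC f) -hchar map_char_poly -eigenvalue_root_char //.
case/mapP => l lL dl.
exists l; first done.
rewrite -fle.
have -> : f (l * (x *m x^T) 0 0) = d 0 i0 * f ((x *m x^T) 0 0).
  by rewrite dl; exact: (rmorphM f).
set xc := map_mx f x.
have xt : xc^t* = map_mx f x^T.
  by apply/matrixP => i j; rewrite !mxE; exact: conjc_real.
have e1 : f ((x *m A *m x^T) 0 0) = (xc *m Ac *m xc^t*) 0 0.
  rewrite xt; have <- : map_mx f (x *m A *m x^T) = xc *m Ac *m map_mx f x^T by rewrite !map_mxM.
  by rewrite [RHS]mxE.
have e2 : f ((x *m x^T) 0 0) = (xc *m xc^t*) 0 0.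
  rewrite xt; have <- : map_mx f (x *m x^T) = xc *m map_mx f x^T by rewrite !map_mxM.
  by rewrite [RHS]mxE.
set y := xc *m P^t*.
have yt : y^t* = P *m xc^t* by rewrite /y trmx_mul map_mxM trmxCK.
have e1' : xc *m Ac *m xc^t* = y *m diag_mx d *m y^t* by rewrite yt eqA /y !mulmxA.
have e2' : xc *m xc^t* = y *m y^t*.
  by rewrite yt /y mulmxA -(mulmxA xc) PP mulmx1.
rewrite e1 e2 e1' e2' !mxE mulr_sumr; apply: ler_sum => j _.
rewrite mul_mx_diag !mxE [_ * d 0 j]mulrC -mulrA.
apply: ler_wpM2r; last exact: Hi0.
exact: mul_conjC_ge0.
Qed.
End Spec.

Section Glue.
Local Open Scope ring_scope.

Lemma poly_eq_eval (p q : {poly R}) : (forall x, p.[x] = q.[x]) -> p = q.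
Proof.
move=> h; apply/eqP; rewrite -subr_eq0; apply/negPn/negP => nz.
set k := size (p - q).
have Hall : all (root (p - q)) [seq i%:R | i <- iota 0 k].
  by apply/allP => y _; rewrite /root hornerD hornerN h subrr.
have Hu : uniq [seq i%:R : R | i <- iota 0 k].
  by rewrite map_inj_uniq ?iota_uniq // => a b /eqP; rewrite eqr_nat => /eqP.
have := max_poly_roots nz Hall Hu.
by rewrite size_map size_iota ltnn.
Qed.

Definition M2mx n (M : nat -> nat -> R) : 'M[R]_n := \matrix_(i, j) M i j.

Lemma sumR_big n g : sumR n g = \sum_(i < n) g i.
Proof. by elim: n => [|n IH] /=; [rewrite big_ord0 | rewrite IH big_ord_recr]. Qed.

Lemma ltbE a b : Nat.ltb a b = (a < b)%N.
Proof. by apply/idP/idP => [/Nat.ltb_spec0/ssrnat.ltP | /ssrnat.ltP/Nat.ltb_spec0]. Qed.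

Lemma eqbE a b : Nat.eqb a b = (a == b)%N.
Proof. by apply/idP/idP => [/Nat.eqb_spec -> | /eqP ->] //; rewrite Nat.eqb_refl. Qed.

Lemma det_eq n : forall M, det n M = \det (M2mx n M).
Proof.
elim: n => [|n IH] M; first by rewrite det_mx00.
have -> : det n.+1 M = sumR n.+1 (fun j => pow (-1) j * M O j * det n (minor M j)) by [].
rewrite sumR_big (expand_det_row _ ord0); apply: eq_bigr => j _.
rewrite /cofactor IH mxE.
have -> : M2mx n (minor M j) = row' ord0 (col' j (M2mx n.+1 M)).
  apply/matrixP => r c; rewrite !mxE /minor ltbE /= /bump.
  by case: ltnP => h.
rewrite RpowE add0n.
by rewrite -mulrA mulrCA.
Qed.

Lemma charE n (A : nat -> nat -> R) x :
  Defs.char_poly n A x = (char_poly (M2mx n A)).[x].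
Proof.
rewrite /Defs.char_poly det_eq /char_poly -horner_evalE -det_map_mx.
congr (\det _); apply/matrixP => i j; rewrite !mxE /= /horner_eval.
rewrite hornerD hornerN hornerC hornerMn hornerX eqbE.
case: (eqVneq i j) => [->|ne]; first by rewrite !eqxx mulr1n.
have ne' : (nat_of_ord i == nat_of_ord j) = false := negbTE ne.
by rewrite ne' mulr0n.
Qed.

End Glue.

Section PartC.
Open Scope R_scope.

Definition lsum (K : list R) := fold_right Rplus 0 K.

Lemma estr_cons a K : estrada (a :: K) = exp a + estrada K.
Proof. reflexivity. Qed.
Lemma lsum_cons a K : lsum (a :: K) = a + lsum K.
Proof. reflexivity. Qed.
Lemma len_cons (a : R) K : INR (length (a :: K)) = INR (length K) + 1.
Proof. apply S_INR. Qed.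

Lemma estr_ge K : INR (length K) + lsum K <= estrada K.
Proof.
induction K as [|a K IH]; [simpl; lra|].
rewrite estr_cons lsum_cons len_cons. pose proof (exp_ineq1_le a). lra.
Qed.

Lemma estr_gt K : lsum K <> 0 -> INR (length K) + lsum K < estrada K.
Proof.
induction K as [|a K IH]; [simpl; lra|].
rewrite estr_cons lsum_cons len_cons. intros h.
destruct (Req_dec a 0) as [->|na].
- rewrite exp_0. assert (lsum K <> 0) by lra. specialize (IH H). lra.
- pose proof (exp_ineq1 a na). pose proof (estr_ge K). lra.
Qed.

Lemma estr_app a b : estrada (app a b) = estrada a + estrada b.
Proof. induction a as [|x a IH]; [simpl; lra|]. rewrite -app_comm_cons !estr_cons IH; lra. Qed.
Lemma lsum_app a b : lsum (app a b) = lsum a + lsum b.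
Proof. induction a as [|x a IH]; [simpl; lra|]. rewrite -app_comm_cons !lsum_cons IH; lra. Qed.

Lemma final_ineq L l0 t : In l0 L -> lsum L = 0 -> t <= l0 -> 0 < t ->
  estrada L > exp t + INR (Nat.sub (length L) 1) - t.
Proof.
intros hin hs htl ht.
destruct (in_split _ _ hin) as [L1 [L2 ->]].
set (K := app L1 L2).
assert (eE : estrada (app L1 (l0 :: L2)) = exp l0 + estrada K).
{ unfold K. rewrite !estr_app estr_cons. lra. }
assert (eS : lsum (app L1 (l0 :: L2)) = l0 + lsum K).
{ unfold K. rewrite !lsum_app lsum_cons. lra. }
assert (eL : Nat.sub (length (app L1 (l0 :: L2))) 1 = length K).
{ unfold K. rewrite !length_app. simpl. lia. }
rewrite eE eL. rewrite eS in hs.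
assert (hK : lsum K <> 0) by lra.
pose proof (estr_gt hK).
assert (e1 : exp l0 = exp t * exp (l0 - t)) by (rewrite <- exp_plus; f_equal; lra).
pose proof (exp_ineq1_le (l0 - t)).
pose proof (exp_ineq1 t). assert (t <> 0) by lra. specialize (H1 H2).
assert ((exp t - 1) * (l0 - t) >= 0) by (apply Rle_ge, Rmult_le_pos; lra).
nra.
Qed.

End PartC.

Section PartB.
Open Scope R_scope.

Lemma sumN_S n g : sumN (S n) g = (sumN n g + g n)%coq_nat.
Proof. reflexivity. Qed.
Lemma sumR_S n g : sumR (S n) g = sumR n g + g n.
Proof. reflexivity. Qed.

Lemma INR_sumN n g : INR (sumN n g) = sumR n (fun i => INR (g i)).
Proof. induction n as [|n IH]; [reflexivity|]. rewrite sumN_S sumR_S plus_INR IH. reflexivity. Qed.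

Lemma sumN_pos n g : le 1 (sumN n g) -> exists k, lt k n /\ le 1 (g k).
Proof.
induction n as [|n IH]; [simpl; lia|]. rewrite sumN_S. intros h.
destruct (le_lt_dec 1 (g n)) as [h1|h1].
- exists n; split; [lia|exact h1].
- destruct IH as [k [hk hk1]]; [lia|]. exists k; split; [lia|exact hk1].
Qed.

Lemma sumN_ge n g k : lt k n -> le (g k) (sumN n g).
Proof.
induction n as [|n IH]; [lia|]. rewrite sumN_S. intros h.
destruct (Nat.eq_dec k n) as [->|ne]; [lia|]. specialize (IH ltac:(lia)). lia.
Qed.

Lemma sumR_nonneg n g : (forall i, 0 <= g i) -> 0 <= sumR n g.
Proof. intros hg; induction n as [|n IH]; [simpl; lra|]. rewrite sumR_S. pose proof (hg n). lra. Qed.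

Lemma sumR_ge n g k : (forall i, 0 <= g i) -> lt k n -> g k <= sumR n g.
Proof.
intros hg; induction n as [|n IH]; [lia|]. rewrite sumR_S. intros h.
destruct (Nat.eq_dec k n) as [->|ne].
- pose proof (sumR_nonneg n hg). lra.
- specialize (IH ltac:(lia)). pose proof (hg n). lra.
Qed.

Lemma sumR_ext n g h : (forall i, g i = h i) -> sumR n g = sumR n h.
Proof. intros e; induction n as [|n IH]; [reflexivity|]. rewrite !sumR_S IH e. reflexivity. Qed.

Lemma sym_sum n (F : nat -> nat -> R) : (forall i, F i i = 0) -> (forall i j, F i j = F j i) ->
  sumR n (fun i => sumR n (F i)) =
  2 * sumR n (fun i => sumR n (fun j => if Nat.ltb i j then F i j else 0)).
Proof.
intros h0 hs.
set (G := fun i j => if Nat.ltb i j then F i j else 0).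
assert (e : forall i j, F i j = G i j + G j i).
{ intros i j. unfold G. rewrite !ltbE. case: (ltngtP i j) => h /=.
  all: first [lra | rewrite (hs i j); lra | rewrite h h0; lra]. }
assert (E : sumR n (fun i => sumR n (F i)) =
            sumR n (fun i => sumR n (G i)) + sumR n (fun i => sumR n (G i))).
{ rewrite !sumR_big.
  transitivity (\sum_(i < n) \sum_(j < n) (G i j + G j i))%R.
  { apply: eq_bigr => i _. rewrite sumR_big. apply: eq_bigr => j _. apply e. }
  under eq_bigr => i _ do rewrite big_split /=.
  rewrite big_split /= [X in (_ + X)%R]exchange_big /=.
  have ei : forall i, sumR n (G i) = (\sum_(j < n) G i j)%R by move=> i; apply: sumR_big.
  by under [in RHS]eq_bigr => i _ do rewrite ei. }
rewrite E. unfold G. cbv beta. lra.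
Qed.
End PartB.

Section Graph.
Open Scope R_scope.

Lemma deg_sum n adj : simple_graph adj ->
  sumR n (fun i => INR (deg n adj i)) = 2 * INR (num_edges n adj).
Proof.
intros [hs hi].
transitivity (sumR n (fun i => sumR n (fun j => INR (if adj i j then 1%nat else 0%nat)))).
{ apply sumR_ext; intro i. unfold deg. apply INR_sumN. }
rewrite sym_sum.
- f_equal. unfold num_edges. rewrite INR_sumN. apply sumR_ext; intro i.
  rewrite INR_sumN. apply sumR_ext; intro j.
  destruct (Nat.ltb i j), (adj i j); reflexivity.
- intro i; rewrite hi; reflexivity.
- intros i j; rewrite hs; reflexivity.
Qed.

Lemma rand_sum n adj : simple_graph adj ->
  sumR n (fun i => sumR n (fun j => sqrt (INR (deg n adj i)) * adj_matrix adj i j * sqrt (INR (deg n adj j))))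
  = 2 * randic_half n adj.
Proof.
intros [hs hi].
rewrite sym_sum.
- f_equal. unfold randic_half. apply sumR_ext; intro i. apply sumR_ext; intro j.
  unfold adj_matrix.
  destruct (Nat.ltb i j), (adj i j); simpl; try lra.
  rewrite mult_INR sqrt_mult; try apply pos_INR. lra.
- intro i; unfold adj_matrix; rewrite hi; lra.
- intros i j; unfold adj_matrix; rewrite hs; lra.
Qed.

Lemma xx_eq n (s : nat -> R) :
  (((\row_(j < n) s j) *m (\row_(j < n) s j)^T) 0 0)%R = sumR n (fun j => s j * s j).
Proof. rewrite mxE sumR_big; apply: eq_bigr => j _; rewrite !mxE; reflexivity. Qed.

Lemma xAx_eq n (s : nat -> R) M :
  (((\row_(j < n) s j) *m M2mx n M *m (\row_(j < n) s j)^T) 0 0)%R =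
  sumR n (fun i => sumR n (fun j => s i * M i j * s j)).
Proof.
rewrite mxE sumR_big.
under eq_bigr => j _ do rewrite mxE big_distrl /=.
rewrite exchange_big /=; apply: eq_bigr => i _; rewrite sumR_big; apply: eq_bigr => j _.
by rewrite !mxE.
Qed.

End Graph.
Section Misc.
Local Open Scope ring_scope.

Lemma fold_eval (L : list R) x :
  fold_right (fun l acc => Rmult (Rminus x l) acc) 1%R L = (\prod_(l <- L) ('X - l%:P)).[x].
Proof.
elim: L => [|a L IH]; first by rewrite big_nil hornerC.
by rewrite big_cons hornerM hornerXsubC -IH.
Qed.

Lemma lsum_big (L : list R) : lsum L = \sum_(l <- L) l.
Proof. elim: L => [|a L IH]; first by rewrite big_nil. by rewrite big_cons -IH. Qed.

Lemma in_In (L : list R) x : x \in L -> In x L.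
Proof.
elim: L => [|a L IH] //; rewrite in_cons => /orP [/eqP ->|h]; [by left | by right; apply: IH].
Qed.

Lemma sum_spec n (A : 'M[R]_n) (L : seq R) :
  char_poly A = \prod_(l <- L) ('X - l%:P) -> (0 < n)%N -> \sum_(l <- L) l = \tr A.
Proof.
move=> hc n0.
have sz : size L = n.
  have := size_char_poly A; rewrite hc size_prod_XsubC; by case.
have e1 : n.-1 = (size L).-1 by rewrite sz.
have := char_poly_trace A n0; rewrite hc e1 coefPn_prod_XsubC; last by rewrite sz -lt0n.
by move/oppr_inj.
Qed.

End Misc.


Section Extra.
Open Scope R_scope.
Lemma randic_pos n adj i j : simple_graph adj -> lt i n -> lt j n ->
  Nat.ltb i j = true -> adj i j = true -> 0 < randic_half n adj.
Proof.
intros [hs hi] hin hjn hij haij.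
assert (hd1 : le 1 (deg n adj i)).
{ unfold deg. pose proof (@sumN_ge n (fun j => if adj i j then 1%nat else 0%nat) j hjn) as h.
  simpl in h. rewrite haij in h. exact h. }
assert (hd2 : le 1 (deg n adj j)).
{ unfold deg. pose proof (@sumN_ge n (fun k => if adj j k then 1%nat else 0%nat) i hin) as h.
  simpl in h. rewrite hs haij in h. exact h. }
assert (nn : forall a b, 0 <= (if andb (Nat.ltb a b) (adj a b) then sqrt (INR (Nat.mul (deg n adj a) (deg n adj b))) else 0)).
{ intros a b. destruct (andb (Nat.ltb a b) (adj a b)); [apply sqrt_pos | lra]. }
unfold randic_half.
apply Rlt_le_trans with (sumR n (fun b => if andb (Nat.ltb i b) (adj i b) then sqrt (INR (Nat.mul (deg n adj i) (deg n adj b))) else 0)).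
- apply Rlt_le_trans with (sqrt (INR (Nat.mul (deg n adj i) (deg n adj j)))).
  + apply sqrt_lt_R0, lt_0_INR. nia.
  + pose proof (@sumR_ge n (fun b => if andb (Nat.ltb i b) (adj i b) then sqrt (INR (Nat.mul (deg n adj i) (deg n adj b))) else 0) j (nn i) hjn) as h.
    simpl in h. rewrite hij haij in h. exact h.
- apply (@sumR_ge n (fun a => sumR n (fun b => if andb (Nat.ltb a b) (adj a b) then sqrt (INR (Nat.mul (deg n adj a) (deg n adj b))) else 0)) i); [|exact hin].
  intro a. apply sumR_nonneg. intro b. apply nn.
Qed.

Lemma final_step (Rd m l : R) : 0 < m -> 0 < Rd -> 2 * Rd <= l * (2 * m) -> Rd/m <= l /\ 0 < Rd/m.
Proof.
intros hm hR h. split.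
- apply (Rmult_le_reg_r m); [exact hm|]. unfold Rdiv. rewrite Rmult_assoc Rinv_l; lra.
- apply Rdiv_lt_0_compat; assumption.
Qed.
End Extra.

Section Main.
Local Open Scope ring_scope.

Lemma main_aux (n : nat) (adj : nat -> nat -> bool) (L : list R) :
  simple_graph adj ->
  le 1 (num_edges n adj) ->
  is_spectrum n (adj_matrix adj) L ->
  Rgt (estrada L)
    (Rminus (Rplus (exp (Rdiv (randic_half n adj) (INR (num_edges n adj)))) (INR (Nat.sub n 1)))
      (Rdiv (randic_half n adj) (INR (num_edges n adj)))).
Proof.
intros hg hm [hlen hchar].
pose proof hg as hg'.
destruct hg as [hs hi].
destruct (sumN_pos hm) as [i [hin hi1]].
destruct (sumN_pos hi1) as [j [hjn hj1]].
assert (eij : andb (Nat.ltb i j) (adj i j) = true).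
{ destruct (andb (Nat.ltb i j) (adj i j)); [reflexivity | simpl in hj1; lia]. }
apply andb_prop in eij. destruct eij as [hij haij].
assert (n0 : (0 < n)%N) by (apply/ssrnat.ltP; lia).
have hp : char_poly (M2mx n (adj_matrix adj)) = \prod_(l <- L) ('X - l%:P).
  by apply: poly_eq_eval => y; rewrite -charE hchar fold_eval.
have sym : (M2mx n (adj_matrix adj))^T = M2mx n (adj_matrix adj).
  by apply/matrixP => a b; rewrite !mxE /adj_matrix hs.
have [l lL hl] := spectral_bound (\row_(j < n) sqrt (INR (deg n adj j))) sym hp n0.
move: hl; rewrite (xAx_eq n (fun k => sqrt (INR (deg n adj k)))) (xx_eq n (fun k => sqrt (INR (deg n adj k)))) rand_sum //.
rewrite (sumR_ext _ (fun j => sqrt_sqrt _ (pos_INR (deg n adj j)))) deg_sum // => /RleP hl.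
have htr : lsum L = 0%R.
  rewrite lsum_big (sum_spec hp n0) /mxtrace big1 // => k _.
  by rewrite mxE /adj_matrix hi.
have hR := randic_pos hg' hin hjn hij haij.
have hm' : Rlt R0 (INR (num_edges n adj)) by apply: lt_0_INR; lia.
rewrite -RmultE in hl.
have [ht1 ht2] := final_step hm' hR hl.
have := final_ineq (in_In lL) htr ht1 ht2.
by rewrite hlen.
Qed.
End Main.

Open Scope R_scope.

Theorem mainTheorem3 (n : nat) (adj : nat -> nat -> bool) (L : list R) :
  simple_graph adj ->
  (1 <= num_edges n adj)%coq_nat ->
  is_spectrum n (adj_matrix adj) L ->
  estrada L >
    exp (randic_half n adj / INR (num_edges n adj)) + INR (n - 1)%coq_nat
    - randic_half n adj / INR (num_edges n adj).
Proof. exact: main_aux. Qed.
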